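(* Let $X$ be a finite connected poset of length $1$ which does not contain a weak crown. Then $\mathcal{AM}(X)=\mathcal{P}(X)$ if and only if $|\mathrm{Min}(X)|=1$ or $|\mathrm{Max}(X)|=1$.
   Context: The length of $X$ is the maximum of $|C|-1$ over chains $C\subseteq X$. A weak $n$-crown ($n\ge2$) is a poset with $2n$ distinct elements $x_1,\dots,x_n,y_1,\dots,y_n$ such that $x_i<y_i$ for $1\le i\le n$, $x_{i+1}<y_i$ for $1\le i\le n-1$, and $x_1<y_n$ (other comparabilities may exist); $X$ contains a weak crown if some subset of $X$ with the induced order is a weak $n$-crown for some $n\ge2$. For $x<y$, $e_{xy}$ denotes the corresponding incidence-algebra basis element and $B=\{e_{xy}:x<y\}$. $\mathcal{C}(X)$ is the set of maximal chains. For a bijection $\theta:B\to B$ and $C:u_1<\dots<u_m$ in $\mathcal{C}(X)$, $\theta$ is increasing on $C$ if there is $D:v_1<\dots<v_m$ in $\mathcal{C}(X)$ with $\theta(e_{u_iu_j})=e_{v_iv_j}$ for all $i<j$, decreasing if $\theta(e_{u_iu_j})=e_{v_{m-j+1}v_{m-i+1}}$ for all $i<j$. $\mathcal{M}(X)$: bijections $B\to B$ increasing or decreasing on every maximal chain. A walk is a sequence $u_0,\dots,u_m$ where for each $i$ one of $u_i,u_{i+1}$ covers the other; closed if $u_0=u_m$. For a closed walk $\Gamma:u_0,\dots,u_m=u_0$ and $z\in X$: $s^+_{\theta,\Gamma}(z)=|\{i: u_i<u_{i+1},\ \exists w>z,\ \theta(e_{zw})=e_{u_iu_{i+1}}\}|$,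 $s^-_{\theta,\Gamma}(z)=|\{i: u_i>u_{i+1},\ \exists w>z,\ \theta(e_{zw})=e_{u_{i+1}u_i}\}|$, $t^+_{\theta,\Gamma}(z)=|\{i: u_i<u_{i+1},\ \exists w<z,\ \theta(e_{wz})=e_{u_iu_{i+1}}\}|$, $t^-_{\theta,\Gamma}(z)=|\{i: u_i>u_{i+1},\ \exists w<z,\ \theta(e_{wz})=e_{u_{i+1}u_i}\}|$, $0\le i\le m-1$. $\theta$ is admissible if $s^+_{\theta,\Gamma}(z)-s^-_{\theta,\Gamma}(z)=t^+_{\theta,\Gamma}(z)-t^-_{\theta,\Gamma}(z)$ for all closed walks $\Gamma$ and all $z$; $\mathcal{AM}(X)$ is the set of admissible elements of $\mathcal{M}(X)$. A bijection $\theta:B\to B$ is proper if there is an automorphism $\lambda$ of $X$ with $\theta(e_{xy})=e_{\lambda(x)\lambda(y)}$ for all $x<y$, or an anti-automorphism $\lambda$ of $X$ with $\theta(e_{xy})=e_{\lambda(y)\lambda(x)}$ for all $x<y$; $\mathcal{P}(X)$ is the set of proper bijections. *)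

(* Defs.v *)
From HB Require Import structures.
From mathcomp Require Import all_boot all_order all_algebra.
Set Implicit Arguments. Unset Strict Implicit. Unset Printing Implicit Defensive.
Import Order.TTheory GRing.Theory.

Local Open Scope order_scope.

Section PosetDefs.
Context {d : Order.disp_t} {T : finPOrderType d}.

Definition Bpairs := {p : T * T | p.1 < p.2}.

Definition is_chain (C : {set T}) : bool :=
  [forall x in C, forall y in C, x >=< y].

Definition maximal_chain (C : {set T}) : Prop :=
  is_chain C /\ (forall C' : {set T}, is_chain C' -> C \subset C' -> C' = C).

Definition poset_length : nat :=
  \max_(C : {set T} | is_chain C) (#|C|).-1.

(** weak crowns (0-indexed: x_0..x_{n-1}, y_0..y_{n-1}) *)
Definition has_weak_crown : Prop :=
  exists (n : nat) (x y : nat -> T),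
    [/\ (2 <= n)%N,
        uniq ([seq x i | i <- iota 0 n] ++ [seq y i | i <- iota 0 n]),
        (forall i, (i < n)%N -> x i < y i),
        (forall i, (i.+1 < n)%N -> x i.+1 < y i)
      & x 0%N < y n.-1].

Definition poset_connected : Prop :=
  forall x y : T, connect (fun a b : T => a >=< b) x y.

Definition Min_set : {set T} := [set x : T | [forall y : T, ~~ (y < x)]].
Definition Max_set : {set T} := [set x : T | [forall y : T, ~~ (x < y)]].

(** theta increasing / decreasing on a maximal chain C, where C is listed
    increasingly as s = u_1 < ... < u_m (0-indexed in the sequence) *)
Definition increasing_on (th : Bpairs -> Bpairs) (C : {set T}) : Prop :=
  forall s : seq T, sorted <%O s -> [set x in s] = C ->
  exists t : seq T,
    [/\ sorted <%O t, maximal_chain [set x in t], size t = size s &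
        forall (x0 : T) (i j : nat), (i < j < size s)%N ->
        forall b : Bpairs, val b = (nth x0 s i, nth x0 s j) ->
          val (th b) = (nth x0 t i, nth x0 t j)].

Definition decreasing_on (th : Bpairs -> Bpairs) (C : {set T}) : Prop :=
  forall s : seq T, sorted <%O s -> [set x in s] = C ->
  exists t : seq T,
    [/\ sorted <%O t, maximal_chain [set x in t], size t = size s &
        forall (x0 : T) (i j : nat), (i < j < size s)%N ->
        forall b : Bpairs, val b = (nth x0 s i, nth x0 s j) ->
          val (th b) = (nth x0 t (size s - j.+1), nth x0 t (size s - i.+1))].

Definition in_M (th : Bpairs -> Bpairs) : Prop :=
  bijective th /\
  (forall C : {set T}, maximal_chain C -> increasing_on th C \/ decreasing_on th C).

Definition covers (a b : T) : bool :=
  (a < b) && [forall z : T, ~~ ((a < z) && (z < b))].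

Definition walk_adj (a b : T) : bool := covers a b || covers b a.

(** a closed walk u_0, ..., u_m = u_0 is given as u0 :: rest, with
    steps (u_i, u_{i+1}), 0 <= i <= m-1 *)
Definition closed_walk (u0 : T) (rest : seq T) : bool :=
  path walk_adj u0 rest && (last u0 rest == u0).

Definition steps (u0 : T) (rest : seq T) : seq (T * T) := zip (u0 :: rest) rest.

Definition s_plus (th : Bpairs -> Bpairs) (u0 : T) (rest : seq T) (z : T) : nat :=
  count (fun st : T * T => (st.1 < st.2) &&
     [exists b : Bpairs, ((val b).1 == z) && (val (th b) == (st.1, st.2))])
    (steps u0 rest).
Definition s_minus (th : Bpairs -> Bpairs) (u0 : T) (rest : seq T) (z : T) : nat :=
  count (fun st : T * T => (st.2 < st.1) &&
     [exists b : Bpairs, ((val b).1 == z) && (val (th b) == (st.2, st.1))])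
    (steps u0 rest).
Definition t_plus (th : Bpairs -> Bpairs) (u0 : T) (rest : seq T) (z : T) : nat :=
  count (fun st : T * T => (st.1 < st.2) &&
     [exists b : Bpairs, ((val b).2 == z) && (val (th b) == (st.1, st.2))])
    (steps u0 rest).
Definition t_minus (th : Bpairs -> Bpairs) (u0 : T) (rest : seq T) (z : T) : nat :=
  count (fun st : T * T => (st.2 < st.1) &&
     [exists b : Bpairs, ((val b).2 == z) && (val (th b) == (st.2, st.1))])
    (steps u0 rest).

Definition admissible (th : Bpairs -> Bpairs) : Prop :=
  forall (u0 : T) (rest : seq T), closed_walk u0 rest ->
  forall z : T,
    ((s_plus th u0 rest z)%:Z - (s_minus th u0 rest z)%:Z
     = (t_plus th u0 rest z)%:Z - (t_minus th u0 rest z)%:Z)%R.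

Definition in_AM (th : Bpairs -> Bpairs) : Prop := in_M th /\ admissible th.

Definition is_automorphism (l : T -> T) : Prop :=
  bijective l /\ (forall x y, (x <= y) = (l x <= l y)).
Definition is_antiautomorphism (l : T -> T) : Prop :=
  bijective l /\ (forall x y, (x <= y) = (l y <= l x)).

Definition is_proper (th : Bpairs -> Bpairs) : Prop :=
  (exists l, is_automorphism l /\
     forall b : Bpairs, val (th b) = (l (val b).1, l (val b).2)) \/
  (exists l, is_antiautomorphism l /\
     forall b : Bpairs, val (th b) = (l (val b).2, l (val b).1)).

End PosetDefs.

(* Main.v *)
Require Import Defs.
From HB Require Import structures.
From mathcomp Require Import all_boot all_order all_algebra zify.
Set Implicit Arguments. Unset Strict Implicit. Unset Printing Implicit Defensive.
Import Order.TTheory GRing.Theory.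
Local Open Scope order_scope.

Section Basics.
Context {d : Order.disp_t} {T : finPOrderType d}.
Hypothesis hlen : poset_length (T := T) = 1%N.

Lemma chain_card (C : {set T}) : is_chain C -> (#|C| <= 2)%N.
Proof.
move=> hC; have := @leq_bigmax_cond _ (fun C : {set T} => is_chain C) (fun C : {set T} => (#|C|).-1) C hC.
rewrite -/(poset_length) hlen; case: #|C| => [|[|[|n]]] //.
Qed.

Lemma no3 (x y z : T) : x < y -> y < z -> False.
Proof.
move=> hxy hyz; have hxz := lt_trans hxy hyz.
have hC : is_chain [set x; y; z].
  apply/forallP => u; apply/implyP; rewrite !inE => hu.
  apply/forallP => v; apply/implyP; rewrite !inE => hv.
  by case/orP: hu => [/orP[]|] /eqP->; case/orP: hv => [/orP[]|] /eqP->;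
    rewrite ?comparablexx // /Order.comparable ?(ltW hxy, ltW hyz, ltW hxz, orbT).
have := chain_card hC.
rewrite [[set x; y; z]]setUC cardsU1 cards2 !inE (lt_eqF hxy) (gt_eqF hxz) (gt_eqF hyz).
by [].
Qed.

Lemma walk_adjE (a b : T) : walk_adj a b = (a < b) || (b < a).
Proof.
rewrite /walk_adj /covers.
have H : forall u v : T, [forall z, ~~ ((u < z) && (z < v))].
  move=> u v; apply/forallP => z; apply/negP => /andP[h1 h2]; exact: no3 h1 h2.
by rewrite !H !andbT.
Qed.


Hypothesis hnc : ~ has_weak_crown (T := T).

Definition rr (a b : T) : rel T :=
  fun u v => walk_adj u v && ((u, v) != (a, b)) && ((u, v) != (b, a)).

Lemma no_bypass (a b : T) : a < b -> ~~ connect (rr a b) a b.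
Proof.
move=> hab; apply/negP => /connectP[p0 hp0 hl0].
case: (shortenP hp0) hl0 => p hp hu _ hl {hp0 p0}.
set w := a :: p; set k := size p.
have hstep i : (i < k)%N -> rr a b (nth a w i) (nth a w i.+1).
  by move=> hi; move/(pathP a): hp => /(_ i hi).
have hadj i : (i < k)%N -> (nth a w i < nth a w i.+1) || (nth a w i.+1 < nth a w i).
  by move=> /hstep /andP[/andP[]]; rewrite walk_adjE.
have halt : forall i, (i < k)%N -> (nth a w i < nth a w i.+1) = ~~ odd i.
  elim=> [|i IH] hi.
    case/orP: (hadj 0%N hi) => h; first by rewrite h.
    by exfalso; exact: no3 h hab.
  have IHi := IH (ltnW hi); rewrite oddS.
  case: (odd i) IHi => IHi; rewrite ?negbK.
    case/orP: (hadj i.+1 hi) => [->//|h].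
    have h' : nth a w i.+1 < nth a w i.
      by case/orP: (hadj i (ltnW hi)) => [h2|//]; rewrite IHi in h2.
    by exfalso; exact: no3 h h'.
  by apply/negbTE/negP => h; exact: no3 (IHi : nth a w i < nth a w i.+1) h.
have hlast : nth a w k = b.
  by rewrite hl -[k]/((size w).-1) nth_last.
have k0 : (0 < k)%N.
  move: hl; rewrite /k; case: (p) => [|? ?] //= hb.
  by move: hab; rewrite hb ltxx.
have kodd : odd k.
  move: k0 hlast (halt k.-1) (hadj k.-1); case: (k) => [|k'] //= _ hb.
  rewrite ltnSn hb => /(_ isT) h1 /(_ isT).
  case: (odd k') h1 => //= h1; rewrite h1 /= => h2.
  by exfalso; exact: no3 hab h2.
have k1 : k != 1%N.
  apply/eqP => ek; have := hstep 0%N; rewrite ek => /(_ isT).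
  have -> : nth a w 1 = b by rewrite -hlast ek.
  by rewrite /rr /= eqxx andbF.
set m := k./2.
have ek : k = m.*2.+1 by rewrite -[in LHS](odd_double_half k) kodd.
have m1 : (1 <= m)%N by move: k1; rewrite ek; case: (m).
have hsz : size w = m.+1.*2 by rewrite /= -/k ek.
apply: hnc; exists m.+1, (fun i => nth a w i.*2), (fun i => nth a w i.*2.+1); split.
- by [].
- have -> : [seq nth a w i.*2 | i <- iota 0 m.+1] ++ [seq nth a w i.*2.+1 | i <- iota 0 m.+1]
     = map (nth a w) ([seq i.*2 | i <- iota 0 m.+1] ++ [seq i.*2.+1 | i <- iota 0 m.+1]).
    by rewrite map_cat -!map_comp.
  rewrite map_inj_in_uniq.
    have inj2 : injective (fun i => i.*2.+1) by move=> i j [] /double_inj.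
    rewrite cat_uniq (map_inj_uniq double_inj) (map_inj_uniq inj2) iota_uniq andTb andbT.
    apply/hasPn => j /mapP[i _ ->]; apply/mapP => [[i' _ h]].
    by have := congr1 odd h; rewrite /= !odd_double.
  move=> i j hi hj /eqP; rewrite nth_uniq //.
    by move/eqP.
    by move: hi; rewrite mem_cat => /orP[] /mapP[i' ]; rewrite mem_iota hsz => /andP[_ ?] ->; lia.
  by move: hj; rewrite mem_cat => /orP[] /mapP[i' ]; rewrite mem_iota hsz => /andP[_ ?] ->; lia.
- move=> i hi; have h := halt i.*2 ltac:(lia); rewrite odd_double in h; exact: h.
- move=> i hi; rewrite doubleS.
  have hi' : (i.*2.+1 < k)%N by lia.
  have h := halt _ hi'; rewrite /= odd_double /= in h.
  case/orP: (hadj _ hi') => h2; last exact: h2.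
  by rewrite h in h2.
- have -> : (m.+1.-1.*2.+1 = k)%N by rewrite ek.
  rewrite hlast; exact: hab.
Qed.


Lemma rr_sym a b : symmetric (rr a b).
Proof.
move=> u v; rewrite /rr !walk_adjE !xpair_eqE [(v < u) || _]orbC.
case: (u == a); case: (u == b); case: (v == a); case: (v == b); by rewrite /= ?andbT ?andbF.
Qed.

Lemma balance (a b : T) (hab : a < b) (u0 : T) (rest : seq T) :
  path walk_adj u0 rest -> last u0 rest = u0 ->
  count_mem (a, b) (steps u0 rest) = count_mem (b, a) (steps u0 rest).
Proof.
set S := fun v => connect (rr a b) a v.
have key : forall u0 rest, path walk_adj u0 rest ->
  (count_mem (b, a) (steps u0 rest) + S u0 = count_mem (a, b) (steps u0 rest) + S (last u0 rest))%N.
  move=> {}u0 {}rest; elim: rest u0 => [|v r IH] u0 //= /andP[hadj hp].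
  have := IH v hp; rewrite /steps /= -/(steps v r) => IHr.
  suff loc : (((u0, v) == (b, a)) + S u0 = ((u0, v) == (a, b)) + S v)%N by lia.
  have hne : a != b by rewrite lt_eqF.
  case: (eqVneq (u0, v) (a, b)) => [[-> ->]|h1].
    rewrite /S connect0 (negbTE (no_bypass hab)).
    by rewrite xpair_eqE (negbTE hne).
  case: (eqVneq (u0, v) (b, a)) => [[-> ->]|h2].
    by rewrite /S connect0 (negbTE (no_bypass hab)).
  have hr : rr a b u0 v by rewrite /rr hadj h1 h2.
  have hr' : rr a b v u0 by rewrite rr_sym.
  rewrite /S; case: (boolP (connect _ a u0)) => hu; case: (boolP (connect _ a v)) => hv //.
    by rewrite (connect_trans hu (connect1 hr)) in hv.
  by rewrite (connect_trans hv (connect1 hr')) in hu.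
move=> hp hl; have := key u0 rest hp; rewrite hl; lia.
Qed.

Lemma count_sum (s : seq (T * T)) (f : pred (T * T)) :
  count f s = (\sum_(p : T * T) f p * count_mem p s)%N.
Proof.
elim: s => [|x s IH] /=; first by rewrite big1 // => p _; rewrite muln0.
rewrite IH.
under eq_bigr => p _ do rewrite mulnDr.
rewrite big_split /=; congr (_ + _).
rewrite (bigD1 x) //= eqxx muln1 big1 ?addn0 // => p /negbTE hp.
by rewrite eq_sym hp muln0.
Qed.

Lemma swap_count (s : seq (T * T)) (P : T -> T -> bool) :
  (forall a b : T, a < b -> count_mem (a, b) s = count_mem (b, a) s) ->
  count (fun st => (st.1 < st.2) && P st.1 st.2) s =
  count (fun st => (st.2 < st.1) && P st.2 st.1) s.
Proof.
move=> hbal; rewrite !count_sum.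
have sinj : injective (fun p : T * T => (p.2, p.1)) by move=> [? ?] [? ?] [-> ->].
rewrite [RHS](reindex_inj sinj); apply: eq_bigr => -[u v] _ /=.
by case h: (u < v) => //=; rewrite hbal.
Qed.

Lemma adm_all (th : Bpairs (T := T) -> Bpairs) : admissible th.
Proof.
move=> u0 rest /andP[hp /eqP hl] z.
have hb := fun a b (hab : a < b) => balance hab hp hl.
rewrite /s_plus /s_minus /t_plus /t_minus.
rewrite (swap_count (fun u v => [exists b0, ((val b0).1 == z) && (val (th b0) == (u, v))]) hb).
rewrite (swap_count (fun u v => [exists b0, ((val b0).2 == z) && (val (th b0) == (u, v))]) hb).
by rewrite !GRing.subrr.
Qed.


Lemma pair_chain (v w : T) : v < w -> is_chain [set v; w].
Proof.
move=> hvw; apply/forallP => u; apply/implyP; rewrite !inE => hu.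
apply/forallP => x; apply/implyP; rewrite !inE => hx.
by case/orP: hu => /eqP->; case/orP: hx => /eqP->;
  rewrite ?comparablexx // /Order.comparable (ltW hvw) ?orbT.
Qed.

Lemma edge_max (v w : T) : v < w -> maximal_chain [set x in [:: v; w]].
Proof.
move=> hvw.
have -> : [set x in [:: v; w]] = [set v; w] by apply/setP => x; rewrite !inE.
split; first exact: pair_chain.
move=> C' hC' hsub; apply/eqP; rewrite eq_sym eqEcard hsub /= cards2 (lt_eqF hvw).
exact: chain_card.
Qed.

Lemma in_M_all (th : Bpairs (T := T) -> Bpairs) : bijective th -> in_M th.
Proof.
move=> hb; split => // C hC; left => s hs hsC.
case: s hs hsC => [|x [|y [|z s']]] hs hsC.
- exists [::]; split => //; first by rewrite hsC.
  by move=> x0 i j /andP[_].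
- exists [:: x]; split => //; first by rewrite hsC.
  move=> x0 i j; case: i => [|i]; case: j => [|j] //= /andP[_]; by case: j.
- have hxy : x < y by move: hs => /= /andP[].
  set b0 : Bpairs (T := T) := exist _ (x, y) hxy.
  exists [:: (val (th b0)).1; (val (th b0)).2]; split => //.
  + by rewrite /= andbT; exact: (valP (th b0)).
  + exact: (edge_max (valP (th b0))).
  + move=> x0 i j /andP[hij hj] b; rewrite /= in hj.
    have [-> ->] : i = 0%N /\ j = 1%N by lia.
    move=> hbv.
    have -> : b = b0 by apply: val_inj; rewrite hbv.
    by case: (val (th b0)).
- exfalso; move: hs => /= /andP[h1 /andP[h2 _]]; exact: no3 h1 h2.
Qed.

Lemma lower_min (x y : T) : x < y -> x \in Min_set (T := T).
Proof.
move=> hxy; rewrite inE; apply/forallP => z; apply/negP => hzx; exact: no3 hzx hxy.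
Qed.

Lemma upper_max (x y : T) : x < y -> y \in Max_set (T := T).
Proof.
move=> hxy; rewrite inE; apply/forallP => z; apply/negP => hyz; exact: no3 hxy hyz.
Qed.

Lemma cmp_cases (x y : T) : x >=< y -> x != y -> (x < y) \/ (y < x).
Proof.
rewrite /Order.comparable !le_eqVlt => /orP[/orP[]|/orP[]] /=.
- by move=> ->.
- by left.
- by rewrite eq_sym => ->.
- by right.
Qed.

Lemma exists_edge : exists x y : T, x < y.
Proof.
case: (boolP [exists x : T, exists y : T, x < y]) => [/existsP[x /existsP[y h]]|hn].
  by exists x, y.
exfalso; suff : (poset_length (T := T) <= 0)%N by rewrite hlen.
apply/bigmax_leqP => C hC.
case: (boolP (1 < #|C|)%N) => [/card_gt1P[u [v [hu hv huv]]]|hc1]; last by lia.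
move: hC => /forallP/(_ u)/implyP/(_ hu)/forallP/(_ v)/implyP/(_ hv) hc.
exfalso; case: (cmp_cases hc huv) => h; move/negP: hn; apply.
  by apply/existsP; exists u; apply/existsP; exists v.
by apply/existsP; exists v; apply/existsP; exists u.
Qed.


Lemma star_min (m : T) : Min_set (T := T) = [set m] ->
  forall th : Bpairs (T := T) -> Bpairs, bijective th -> is_proper th.
Proof.
move=> hM th hb.
have hm : forall x, x != m -> m < x.
  move=> x hx; have : x \notin Min_set (T := T) by rewrite hM inE.
  rewrite inE negb_forall => /existsP[y]; rewrite negbK => hyx.
  have : y \in Min_set (T := T) := lower_min hyx.
  by rewrite hM inE => /eqP ey; rewrite -ey.
have hlo : forall b : Bpairs (T := T), (val b).1 = m.
  by move=> b; have := lower_min (valP b); rewrite hM inE => /eqP.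
pose l := fun z => if (insub (m, z) : option (Bpairs (T := T))) is Some b
                   then (val (th b)).2 else m.
have lm : l m = m by rewrite /l insubF //= ltxx.
have lz : forall b : Bpairs (T := T), l (val b).2 = (val (th b)).2.
  move=> b; rewrite /l; case: insubP => [u _ hu|hn].
    have -> : u = b by apply: val_inj; rewrite hu -(hlo b); case: (val b).
    by [].
  by exfalso; move: hn; rewrite /= -(hlo b) (valP b).
have lz' : forall z (hz : z != m), l z = (val (th (exist _ (m, z) (hm z hz) : Bpairs (T := T)))).2.
  by move=> z hz; rewrite -lz.
have lne : forall z, z != m -> l z != m.
  move=> z hz; rewrite (lz' z hz); move: (th _) => c.
  by rewrite -(hlo c) (gt_eqF (valP c)).
have linj : injective l.
  move=> x y; case: (eqVneq x m) => [->|hx]; case: (eqVneq y m) => [->|hy] //.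
  - by rewrite lm => e; move: (lne y hy); rewrite -e eqxx.
  - by rewrite lm => e; move: (lne x hx); rewrite e eqxx.
  rewrite (lz' x hx) (lz' y hy) => e.
  have : th (exist _ (m, x) (hm x hx)) = th (exist _ (m, y) (hm y hy)).
    apply: val_inj; rewrite [LHS]surjective_pairing [RHS]surjective_pairing e.
    by rewrite !hlo.
  by move/(bij_inj hb)/(congr1 val) => [].
have ordm : forall x y : T, x != y -> (x <= y) = (x == m).
  move=> x y hxy; rewrite le_eqVlt (negbTE hxy) /=; apply/idP/eqP => [h|ex].
    by have := lower_min h; rewrite hM inE => /eqP.
  by rewrite ex; apply: (hm); rewrite -ex eq_sym.
left; exists l; split; last first.
  by move=> b; rewrite (hlo b) lm lz -(hlo (th b)); case: (val (th b)).
split; first exact: injF_bij.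
move=> x y; case: (eqVneq x y) => [->|hxy]; first by rewrite !lexx.
have hl : l x != l y by apply: contra_neq hxy; exact: linj.
rewrite !ordm //; case: (eqVneq x m) => [->|hx]; first by rewrite lm eqxx.
by rewrite (negbTE (lne _ hx)).
Qed.

Lemma star_max (m : T) : Max_set (T := T) = [set m] ->
  forall th : Bpairs (T := T) -> Bpairs, bijective th -> is_proper th.
Proof.
move=> hM th hb.
have hm : forall x, x != m -> x < m.
  move=> x hx; have : x \notin Max_set (T := T) by rewrite hM inE.
  rewrite inE negb_forall => /existsP[y]; rewrite negbK => hyx.
  have : y \in Max_set (T := T) := upper_max hyx.
  by rewrite hM inE => /eqP ey; rewrite -ey.
have hlo : forall b : Bpairs (T := T), (val b).2 = m.
  by move=> b; have := upper_max (valP b); rewrite hM inE => /eqP.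
pose l := fun z => if (insub (z, m) : option (Bpairs (T := T))) is Some b
                   then (val (th b)).1 else m.
have lm : l m = m by rewrite /l insubF //= ltxx.
have lz : forall b : Bpairs (T := T), l (val b).1 = (val (th b)).1.
  move=> b; rewrite /l; case: insubP => [u _ hu|hn].
    have -> : u = b by apply: val_inj; rewrite hu -(hlo b); case: (val b).
    by [].
  by exfalso; move: hn; rewrite /= -(hlo b) (valP b).
have lz' : forall z (hz : z != m), l z = (val (th (exist _ (z, m) (hm z hz) : Bpairs (T := T)))).1.
  by move=> z hz; rewrite -lz.
have lne : forall z, z != m -> l z != m.
  move=> z hz; rewrite (lz' z hz); move: (th _) => c.
  by rewrite -(hlo c) (lt_eqF (valP c)).
have linj : injective l.
  move=> x y; case: (eqVneq x m) => [->|hx]; case: (eqVneq y m) => [->|hy] //.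
  - by rewrite lm => e; move: (lne y hy); rewrite -e eqxx.
  - by rewrite lm => e; move: (lne x hx); rewrite e eqxx.
  rewrite (lz' x hx) (lz' y hy) => e.
  have : th (exist _ (x, m) (hm x hx)) = th (exist _ (y, m) (hm y hy)).
    apply: val_inj; rewrite [LHS]surjective_pairing [RHS]surjective_pairing e.
    by rewrite !hlo.
  by move/(bij_inj hb)/(congr1 val) => [].
have ordm : forall x y : T, x != y -> (x <= y) = (y == m).
  move=> x y hxy; rewrite le_eqVlt (negbTE hxy) /=; apply/idP/eqP => [h|ex].
    by have := upper_max h; rewrite hM inE => /eqP.
  by rewrite ex; apply: (hm); rewrite -ex.
left; exists l; split; last first.
  by move=> b; rewrite (hlo b) lm lz -(hlo (th b)); case: (val (th b)).
split; first exact: injF_bij.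
move=> x y; case: (eqVneq x y) => [->|hxy]; first by rewrite !lexx.
have hl : l x != l y by apply: contra_neq hxy; exact: linj.
rewrite !ordm //; case: (eqVneq y m) => [->|hy]; first by rewrite lm eqxx.
by rewrite (negbTE (lne _ hy)).
Qed.

Lemma proper_bij (th : Bpairs (T := T) -> Bpairs) : is_proper th -> bijective th.
Proof.
move=> hp; apply: injF_bij => b1 b2 e; apply: val_inj.
case: hp => [[l [[hl _] hth]]|[l [[hl _] hth]]];
  move: (congr1 val e); rewrite !hth => -[/(bij_inj hl) e1 /(bij_inj hl) e2];
  by rewrite [LHS]surjective_pairing [RHS]surjective_pairing e1 e2.
Qed.


Lemma config (a b c dd : T) : c < b -> c < dd -> a < b -> a != c -> b != dd ->
  exists th : Bpairs (T := T) -> Bpairs, in_AM th /\ ~ is_proper th.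
Proof.
move=> hcb hcd hab hac hbd.
pose e1 : Bpairs (T := T) := exist _ (c, b) hcb.
pose e2 : Bpairs (T := T) := exist _ (c, dd) hcd.
pose e3 : Bpairs (T := T) := exist _ (a, b) hab.
have e12 : e1 != e2 by apply/eqP => /(congr1 val) [] /eqP; rewrite (negbTE hbd).
have e31 : e3 != e1 by apply/eqP => /(congr1 val) [] /eqP; rewrite (negbTE hac).
have e32 : e3 != e2 by apply/eqP => /(congr1 val) [] /eqP; rewrite (negbTE hac).
pose th x := if x == e1 then e2 else if x == e2 then e1 else x.
have hinv : involutive th.
  move=> x; rewrite /th; case: (eqVneq x e1) => [->|h1].
    by rewrite eq_sym (negbTE e12) eqxx.
  case: (eqVneq x e2) => [->|h2]; first by rewrite eqxx.
  by rewrite (negbTE h1) (negbTE h2).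
exists th; split.
  split; [exact: in_M_all (inv_bij hinv) | exact: adm_all].
have th1 : th e1 = e2 by rewrite /th eqxx.
have th3 : th e3 = e3 by rewrite /th (negbTE e31) (negbTE e32).
case => [[l [_ hl]]|[l [_ hl]]].
  have h1 := hl e1; have h3 := hl e3; rewrite th1 /= in h1; rewrite th3 /= in h3.
  case: h1 => _ h1; case: h3 => _ h3.
  by move: hbd; rewrite h3 -h1 eqxx.
have h1 := hl e1; have h3 := hl e3; rewrite th1 /= in h1; rewrite th3 /= in h3.
case: h1 => h1 _; case: h3 => h3 _.
by move: hac; rewrite h3 -h1 eqxx.
Qed.

Lemma path_out (x y : T) : poset_connected (T := T) -> x != y ->
  exists v p, [/\ x >=< v, v != x, path (fun a b : T => a >=< b) v p,
                  uniq (x :: v :: p) & last v p = y].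
Proof.
move=> hc hxy; move: (hc x y) => /connectP[p0 hp0 hl0].
case: (shortenP hp0) hl0 => p hp hu _ hl {hp0 p0}.
case: p hp hu hl => [|v p] /=; first by move=> _ _ e; rewrite e eqxx in hxy.
move=> /andP[hxv hp] hu hl; exists v, p; split => //.
by move: hu => /andP[hx _]; apply/eqP => e; move: hx; rewrite e inE eqxx.
Qed.

Lemma nonstar : poset_connected (T := T) -> #|Min_set (T := T)| != 1%N ->
  #|Max_set (T := T)| != 1%N ->
  exists th : Bpairs (T := T) -> Bpairs, in_AM th /\ ~ is_proper th.
Proof.
move=> hconn hmin hmax.
have [x0 [y0 h0]] := exists_edge.
have m1min := lower_min h0.
have minP : forall m z, m \in Min_set (T := T) -> z < m -> False.
  by move=> m z; rewrite inE => /forallP /(_ z) /negP.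
have maxP : forall m z, m \in Max_set (T := T) -> m < z -> False.
  by move=> m z; rewrite inE => /forallP /(_ z) /negP.
have [m2 [m2min hm12]] : exists m2, m2 \in Min_set (T := T) /\ x0 != m2.
  have h1 : (0 < #|Min_set (T := T)|)%N by apply/card_gt0P; exists x0.
  have : (1 < #|Min_set (T := T)|)%N by move: hmin h1; case: (#|Min_set (T := T)|) => [|[|n]].
  move/card_gt1P => [u [v [hu hv huv]]].
  case: (eqVneq u x0) => [eu|hu0]; first by exists v; split => //; rewrite -eu.
  by exists u; split => //; rewrite eq_sym.
have [w1 [p [hc1 hne1 hp1 hu1 hl1]]] := path_out hconn hm12.
have hxw1 : x0 < w1.
  rewrite eq_sym in hne1.
  by case: (cmp_cases hc1 hne1) => // h; case: (minP _ _ m1min h).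
case: p hp1 hu1 hl1 => [|w2 p] /=.
  by move=> _ _ e; subst w1; case: (minP _ _ m2min hxw1).
move=> /andP[hc2 _] hu1 _.
have hw2x : w2 != x0.
  by move: (hu1) => /andP[hx _]; apply/eqP => e; move: hx; rewrite e !inE eqxx orbT.
have hw21 : w1 != w2.
  by move: hu1 => /= /andP[_ /andP[]]; rewrite inE negb_or => /andP[].
have hw2w1 : w2 < w1.
  by case: (cmp_cases hc2 hw21) => // h; case: (no3 hxw1 h).
have w1max := upper_max hxw1.
have [y [ymax hy1]] : exists y, y \in Max_set (T := T) /\ w1 != y.
  have h1 : (0 < #|Max_set (T := T)|)%N by apply/card_gt0P; exists w1.
  have : (1 < #|Max_set (T := T)|)%N by move: hmax h1; case: (#|Max_set (T := T)|) => [|[|n]].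
  move/card_gt1P => [u [v [hu hv huv]]].
  case: (eqVneq u w1) => [eu|hu0]; first by exists v; split => //; rewrite -eu.
  by exists u; split => //; rewrite eq_sym.
have [v1 [q [hc3 hne3 hq hu3 hl3]]] := path_out hconn hy1.
have hv1 : v1 < w1.
  rewrite eq_sym in hne3.
  by case: (cmp_cases hc3 hne3) => // h; case: (maxP _ _ w1max h).
case: q hq hu3 hl3 => [|v2 q] /=.
  by move=> _ _ e; subst v1; case: (maxP _ _ ymax hv1).
move=> /andP[hc4 _] hu3 _.
have hv2w : v2 != w1.
  by move: (hu3) => /andP[hx _]; apply/eqP => e; move: hx; rewrite e !inE eqxx orbT.
have hv12 : v1 != v2.
  by move: hu3 => /= /andP[_ /andP[]]; rewrite inE negb_or => /andP[].
have hv1v2 : v1 < v2.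
  by case: (cmp_cases hc4 hv12) => // h; case: (no3 h hv1).
have [a [ha hac]] : exists a, a < w1 /\ a != v1.
  case: (eqVneq x0 v1) => [e|ne]; last by exists x0.
  by exists w2; split => //; rewrite -e.
apply: (config hv1 hv1v2 ha hac); by rewrite eq_sym.
Qed.

End Basics.

Theorem corollary4p7 (d : Order.disp_t) (T : finPOrderType d) :
  poset_connected (T := T) ->
  poset_length (T := T) = 1%N ->
  ~ has_weak_crown (T := T) ->
  ((forall th : Bpairs (T := T) -> Bpairs, in_AM th <-> is_proper th) <->
   (#|Min_set (T := T)| = 1%N \/ #|Max_set (T := T)| = 1%N)).
Proof.
move=> hconn hlen hnc; split.
  move=> H.
  case: (eqVneq #|Min_set (T := T)| 1%N) => [->|hmin]; first by left.
  case: (eqVneq #|Max_set (T := T)| 1%N) => [->|hmax]; first by right.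
  exfalso; have [th [ham hnp]] := nonstar hlen hnc hconn hmin hmax.
  exact: hnp ((H th).1 ham).
move=> hstar th; split.
  move=> [[hb _] _].
  case: hstar => /eqP /cards1P [m hm].
    exact: (@star_min d T hlen m hm th hb).
  exact: (@star_max d T hlen m hm th hb).
move=> hp; have hb := proper_bij hp; split; first exact: (@in_M_all d T hlen th hb).
exact: (@adm_all d T hlen hnc th).
Qed.
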